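(* Let $q=2^s$, $s\ge1$, let $n$ be odd, and let $C_1,C_2\subseteq\mathbb F_q^n$ be cyclic codes with generating sets $I_1^{(q)},I_2^{(q)}\subseteq\mathbb Z_n$ which form a $q$-ary CSS-$T$ pair (in particular $C_2\subseteq C_1$). For $i=1,2$ let $I_i^{(2)}\subseteq\mathbb Z_n$ be the generating set of the binary cyclic code $\mathrm{tr}(C_i)$ (with respect to the same $\beta$). Then (1) $I_2^{(q)}\subseteq I_1^{(q)}$, and (2) $0\notin I_1^{(2)}+I_1^{(2)}+I_2^{(2)}$ (equivalently, $n\bmod n$ does not lie in this sum).
   Context: A cyclic code $C\subseteq\mathbb F_q^n$ with $\gcd(q,n)=1$ is an ideal of $\mathbb F_q[x]/(x^n-1)$ generated by a polynomial $g(x)\mid x^n-1$. Fix a primitive $n$-th root of unity $\beta$ in an extension of $\mathbb F_q$. The generating set of $C$ is $I=\{i\in\mathbb Z_n: g(\beta^i)\neq 0\}$ (the defining set is its complement). The Minkowski sum of $A,B\subseteq\mathbb Z_n$ is $A+B=\{a+b:a\in A,b\in B\}$. Let $\mathrm{tr}:\mathbb F_q\to\mathbb F_2$, $\mathrm{tr}(x)=\sum_{i=0}^{s-1}x^{2^i}$, applied coordinatewise; $\mathrm{tr}(C)=\{\mathrm{tr}(c):c\in C\}$ (this is a binary cyclic code). Let $\mathcal H=\mathbb C^q$ with orthonormal basis $\{|x\rangle:x\in\mathbb F_q\}$ and $\mathcal H^{\otimes n}$ with basis $|x\rangle=|x_1\rangle\otimes\cdots\otimes|x_n\rangle$, $x\in\mathbb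 F_q^n$. For $\lambda\in\mathbb F_q$, $T^{(\lambda)}=\sum_{x\in\mathbb F_q}e^{i\pi\,\mathrm{tr}(\lambda x)/4}|x\rangle\langle x|$, where $\mathrm{tr}(\lambda x)\in\{0,1\}$ is regarded as an integer. For $\mathbb F_q$-linear codes $C_2\subseteq C_1\subseteq\mathbb F_q^n$, the CSS code $\mathrm{CSS}(C_1,C_2)\subseteq\mathcal H^{\otimes n}$ is the complex linear span of the states $|w+C_2\rangle=|C_2|^{-1/2}\sum_{c\in C_2}|w+c\rangle$ for $w\in C_1$. The pair $(C_1,C_2)$ is a $q$-ary CSS-$T$ pair if $(T^{(\lambda)})^{\otimes n}$ maps $\mathrm{CSS}(C_1,C_2)$ into itself for every $\lambda\in\mathbb F_q$. *)

(* Defs.v *)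
From HB Require Import structures.
From mathcomp Require Import all_boot all_order all_algebra all_field.
Set Implicit Arguments. Unset Strict Implicit. Unset Printing Implicit Defensive.
Import Order.TTheory GRing.Theory Num.Theory.
Local Open Scope ring_scope.

(* Vectors of F^n are row vectors 'rV[F]_n; Z_n is modelled by 'I_n with
   addition modulo n. *)

Definition wpoly (R : nzRingType) (n : nat) (c : 'rV[R]_n) : {poly R} :=
  \sum_(i < n) c ord0 i *: 'X^i.

(* cyclic code of length n generated by g (g | x^n - 1): the ideal <g> of
   R[x]/(x^n-1), seen as a set of words *)
Definition cyclic_code (R : finFieldType) (n : nat) (g : {poly R}) : {set 'rV[R]_n} :=
  [set c : 'rV[R]_n | g %| wpoly c].

Definition genset (R : nzRingType) (K : fieldType) (emb : R -> K) (beta : K)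
  (n : nat) (g : {poly R}) : {set 'I_n} :=
  [set i : 'I_n | (map_poly emb g).[beta ^+ i] != 0].

Definition msum (n : nat) (A B : {set 'I_n}) : {set 'I_n} :=
  [set i : 'I_n | [exists a in A, exists b in B, ((a + b) %% n)%N == i :> nat]].

Definition f2F (F : nzRingType) (b : 'F_2) : F := (val b)%:R.

Definition trF (F : finFieldType) (s : nat) (x : F) : F :=
  \sum_(i < s) x ^+ (2 ^ i).

Definition tr_nat (F : finFieldType) (s : nat) (x : F) : nat :=
  if trF s x == 0 then 0%N else 1%N.
Definition tr2 (F : finFieldType) (s : nat) (x : F) : 'F_2 := (tr_nat s x)%:R.

Definition trace_code (F : finFieldType) (s n : nat) (C : {set 'rV[F]_n})
  : {set 'rV['F_2]_n} := [set map_mx (tr2 s) c | c in C].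

Definition omega8 : algC := 4.-root (-1).   (* = e^{i pi/4} *)

Definition coset_state (F : finFieldType) (n : nat) (C2 : {set 'rV[F]_n})
  (w : 'rV[F]_n) : 'rV[F]_n -> algC :=
  fun x => (sqrtC (#|C2|%:R))^-1 * \sum_(c in C2) (x == w + c)%:R.

Definition in_CSS (F : finFieldType) (n : nat) (C1 C2 : {set 'rV[F]_n})
  (v : 'rV[F]_n -> algC) : Prop :=
  exists a : 'rV[F]_n -> algC,
    forall x, v x = \sum_(w in C1) a w * coset_state C2 w x.

Definition Tn (F : finFieldType) (s n : nat) (lam : F)
  (v : 'rV[F]_n -> algC) : 'rV[F]_n -> algC :=
  fun x => (\prod_(j < n) omega8 ^+ tr_nat s (lam * x ord0 j)) * v x.

Definition CSST_pair (F : finFieldType) (s n : nat) (C1 C2 : {set 'rV[F]_n})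
  : Prop :=
  C2 \subset C1 /\
  forall (lam : F) (v : 'rV[F]_n -> algC), in_CSS C1 C2 v -> in_CSS C1 C2 (Tn s lam v).

(* Main.v *)
Require Import Defs.
From HB Require Import structures.
From mathcomp Require Import all_boot all_order all_algebra all_field zify.
Import GRing.Theory Num.Theory.
Local Open Scope ring_scope.
Set Implicit Arguments. Unset Strict Implicit.

Definition e2 (F : nzRingType) (H : 2%:R = 0 :> F) (b : 'F_2) : F := (val b)%:R.

Lemma F2_cases (b : 'F_2) : b = 0 \/ b = 1.
Proof.
case: b => [[|[|k]] Hk].
- by left; apply: val_inj.
- by right; apply: val_inj.
- by [].
Qed.

Lemma e2_nmod (F : nzRingType) (H : 2%:R = 0 :> F) : nmod_morphism (e2 H).
Proof.
split; first by [].
move=> a b; case: (F2_cases a) => ->; case: (F2_cases b) => ->; rewrite /e2 /=;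
  rewrite ?add0r ?addr0 ?H //.
Qed.

Lemma e2_mon (F : nzRingType) (H : 2%:R = 0 :> F) : monoid_morphism (e2 H).
Proof.
split; first by [].
move=> a b; case: (F2_cases a) => ->; case: (F2_cases b) => ->; rewrite /e2 /=;
  rewrite ?mul0r ?mulr0 ?mul1r ?mulr1 //.
Qed.

HB.instance Definition _ (F : nzRingType) (H : 2%:R = 0 :> F) :=
  GRing.isNmodMorphism.Build 'F_2 F (e2 H) (e2_nmod H).
HB.instance Definition _ (F : nzRingType) (H : 2%:R = 0 :> F) :=
  GRing.isMonoidMorphism.Build 'F_2 F (e2 H) (e2_mon H).


Lemma char2F (F : finFieldType) s : #|F| = (2^s)%N -> 2%:R = 0 :> F.
Proof. by move=> cF; apply: (pcharf0 (card_finPcharP cF (isT : prime 2))). Qed.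

Lemma sqrD2 (R : comNzRingType) (H : 2%:R = 0 :> R) (x y : R) :
  (x + y) ^+ 2 = x ^+ 2 + y ^+ 2.
Proof. by rewrite sqrrD -mulr_natr H mulr0 addr0. Qed.

Lemma pow2D (R : comNzRingType) (H : 2%:R = 0 :> R) (x y : R) i :
  (x + y) ^+ (2 ^ i) = x ^+ (2 ^ i) + y ^+ (2 ^ i).
Proof.
elim: i => [|i IH]; first by rewrite expn0 !expr1.
by rewrite expnSr !exprM IH sqrD2.
Qed.

Lemma trF_add (F : finFieldType) s (H : 2%:R = 0 :> F) (x y : F) :
  trF s (x + y) = trF s x + trF s y.
Proof. by rewrite /trF -big_split; apply: eq_bigr => i _; apply: pow2D. Qed.

Lemma trF_sq (F : finFieldType) s (cF : #|F| = (2^s)%N) (x : F) :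
  trF s x ^+ 2 = trF s x.
Proof.
have H := char2F cF.
rewrite /trF (big_morph (fun y : F => y ^+ 2) (sqrD2 H) (expr0n _ 2)).
set f := fun i : nat => x ^+ (2 ^ i).
have -> : \sum_(i < s) (x ^+ (2 ^ i)) ^+ 2 = \sum_(i < s) f i.+1.
  by apply: eq_bigr => i _; rewrite /f -exprM expnSr.
have E1 : \sum_(i < s.+1) f i = f 0%N + \sum_(i < s) f i.+1 by rewrite big_ord_recl.
have E2 : \sum_(i < s.+1) f i = \sum_(i < s) f i + f s by rewrite big_ord_recr.
have E := etrans (esym E1) E2.
have fs : f s = f 0%N by rewrite /f expn0 expr1 -cF expf_card.
rewrite fs addrC in E.
exact: (addIr (f 0%N) E).
Qed.

Lemma trF01 (F : finFieldType) s (cF : #|F| = (2^s)%N) (x : F) :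
  trF s x = 0 \/ trF s x = 1.
Proof.
have := trF_sq cF x; set t := trF s x => E.
have : t * (t - 1) = 0 by rewrite mulrBr mulr1 -expr2 E subrr.
by move/eqP; rewrite mulf_eq0 subr_eq0 => /orP [/eqP -> | /eqP ->]; [left|right].
Qed.

Lemma tr_nat_le1 (F : finFieldType) s (x : F) : (tr_nat s x <= 1)%N.
Proof. by rewrite /tr_nat; case: ifP. Qed.

Lemma tr_natE (F : finFieldType) s (cF : #|F| = (2^s)%N) (x : F) :
  (tr_nat s x)%:R = trF s x.
Proof.
rewrite /tr_nat; case: (trF01 cF x) => ->; rewrite ?eqxx //.
by rewrite oner_eq0.
Qed.

Lemma tr_nat0 (F : finFieldType) s : tr_nat s (0 : F) = 0%N.
Proof.
rewrite /tr_nat /trF big1 ?eqxx // => i _.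
by rewrite expr0n expn_eq0.
Qed.

Lemma tr_natD (F : finFieldType) s (cF : #|F| = (2^s)%N) (x y : F) :
  (tr_nat s (x + y)%R + 2 * (tr_nat s x * tr_nat s y) = tr_nat s x + tr_nat s y)%N.
Proof.
have H := char2F cF.
have E : ((tr_nat s (x + y))%:R : F) = (tr_nat s x + tr_nat s y)%:R.
  by rewrite natrD !tr_natE // trF_add.
move: E (tr_nat_le1 s (x + y)) (tr_nat_le1 s x) (tr_nat_le1 s y).
case: (tr_nat s (x + y)) => [|[|c]] //; case: (tr_nat s x) => [|[|a]] //;
  case: (tr_nat s y) => [|[|b]] //= E _ _ _.
- by move: E; rewrite /= add0n => /eqP; rewrite eq_sym oner_eq0.
 all: move/eqP: E; rewrite ?addn0 ?add0n ?addn1 ?H; by rewrite ?(eq_sym 0) ?oner_eq0.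
Qed.

Lemma omega8_prim : 8.-primitive_root omega8.
Proof.
have w4 : omega8 ^+ 4 = -1 by rewrite /omega8 rootCK.
have w8 : omega8 ^+ 8 = 1 by rewrite (_ : 8 = 4 * 2)%N // exprM w4 sqrrN expr1n.
have [m pm dm] := prim_order_exists (isT : (0 < 8)%N) w8.
have n4 : ~~ (m %| 4)%N.
  rewrite (prim_order_dvd pm) w4; apply/negP => /eqP E.
  have : (2%:R : algC) == 0 by rewrite mulr2n -{1}E addNr.
  by rewrite pnatr_eq0.
have : (m <= 8)%N by apply: dvdn_leq.
move: dm n4 pm; case: m => [|[|[|[|[|[|[|[|[|m]]]]]]]]] //.
Qed.

Lemma omega8_eq a b : omega8 ^+ a = omega8 ^+ b -> a = b %[mod 8].
Proof. by move/eqP; rewrite (eq_prim_root_expr omega8_prim) => /eqP. Qed.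

Definition Nw (F : finFieldType) s n (x : 'rV[F]_n) : nat :=
  \sum_(j < n) tr_nat s (x ord0 j).

Lemma coset_stateE (F : finFieldType) n (C2 : {set 'rV[F]_n}) w x :
  coset_state C2 w x = (sqrtC (#|C2|%:R))^-1 * (x - w \in C2)%:R.
Proof.
rewrite /coset_state; congr (_ * _).
have E : forall c, (x == w + c) = (c == x - w).
  by move=> c; rewrite [RHS]eq_sym subr_eq addrC.
under eq_bigr => c _ do rewrite E.
case: (boolP (x - w \in C2)) => Hin.
  rewrite (bigD1 (x - w)) //= eqxx big1 ?addr0 // => c /andP [_ /negbTE ->] //.
by rewrite big1 // => c Hc; case: eqP => // Ec; rewrite -Ec Hc in Hin.
Qed.

Lemma css_phase (F : finFieldType) s n (C1 C2 : {set 'rV[F]_n}) :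
  CSST_pair s C1 C2 ->
  (forall x y, x \in C2 -> y \in C2 -> x + y \in C2) ->
  (forall x, x \in C2 -> - x \in C2) ->
  forall w c, w \in C1 -> c \in C2 -> Nw s (w + c) = Nw s w %[mod 8].
Proof.
move=> [sub T] C2D C2N w c wC cC.
have C20 : 0 \in C2 by rewrite -(subrr c); apply: C2D => //; apply: C2N.
set k := (sqrtC (#|C2|%:R))^-1 : algC.
have k0 : k != 0.
  rewrite invr_eq0 sqrtC_eq0 pnatr_eq0 -lt0n; apply/card_gt0P; by exists c.
have Hv : in_CSS C1 C2 (coset_state C2 w).
  exists (fun w' => (w' == w)%:R) => x.
  rewrite (bigD1 w) //= eqxx mul1r big1 ?addr0 // => w' /andP [_ /negbTE ->].
  by rewrite mul0r.
have [a Ha] := T 1 _ Hv.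
have PE : forall x : 'rV[F]_n, \prod_(j < n) omega8 ^+ tr_nat s (1 * x ord0 j) = omega8 ^+ Nw s x.
  by move=> x; rewrite /Nw -prodrXr; apply: eq_bigr => j _; rewrite mul1r.
have E1 := Ha w; have E2 := Ha (w + c).
rewrite /Tn PE coset_stateE subrr C20 mulr1 in E1.
rewrite /Tn PE coset_stateE addrAC subrr add0r cC mulr1 in E2.
have ES : \sum_(w0 in C1) a w0 * coset_state C2 w0 (w + c) =
          \sum_(w0 in C1) a w0 * coset_state C2 w0 w.
  apply: eq_bigr => w0 _; rewrite !coset_stateE.
  suff -> : (w + c - w0 \in C2) = (w - w0 \in C2) by [].
  rewrite (addrAC w c (- w0)).
  case H1: (w - w0 \in C2); first exact: (C2D _ _ H1 cC).
  apply/negbTE/negP => H2; move/negbT/negP: H1; apply.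
  by rewrite -(addrK c (w - w0)); apply: C2D => //; apply: C2N.
rewrite ES -E1 in E2.
apply: omega8_eq; exact: (mulIf k0 E2).
Qed.

Definition S2 (F : finFieldType) s n (x y : 'rV[F]_n) : nat :=
  \sum_(j < n) tr_nat s (x ord0 j) * tr_nat s (y ord0 j).
Definition S3 (F : finFieldType) s n (x y z : 'rV[F]_n) : nat :=
  \sum_(j < n) tr_nat s (x ord0 j) * tr_nat s (y ord0 j) * tr_nat s (z ord0 j).

Lemma Nw_rel (F : finFieldType) s n (cF : #|F| = (2^s)%N) (x y : 'rV[F]_n) :
  (Nw s (x + y) + 2 * S2 s x y = Nw s x + Nw s y)%N.
Proof.
rewrite /Nw /S2 big_distrr -!big_split /=; apply: eq_bigr => j _.
by rewrite mxE tr_natD.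
Qed.

Lemma S2_rel (F : finFieldType) s n (cF : #|F| = (2^s)%N) (x y z : 'rV[F]_n) :
  (S2 s (x + y) z + 2 * S3 s x y z = S2 s x z + S2 s y z)%N.
Proof.
rewrite /S3 /S2 big_distrr -!big_split /=; apply: eq_bigr => j _.
have E := tr_natD cF (x ord0 j) (y ord0 j); rewrite mxE.
by rewrite -mulnDl -E mulnDl [in LHS]mulnA.
Qed.

Lemma Nw0 (F : finFieldType) s n : Nw s (0 : 'rV[F]_n) = 0%N.
Proof. by rewrite /Nw big1 // => j _; rewrite mxE tr_nat0. Qed.

Lemma parity (F : finFieldType) s n (cF : #|F| = (2^s)%N) (C1 C2 : {set 'rV[F]_n}) :
  CSST_pair s C1 C2 ->
  0 \in C1 ->
  (forall x y, x \in C1 -> y \in C1 -> x + y \in C1) ->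
  (forall x y, x \in C2 -> y \in C2 -> x + y \in C2) ->
  (forall x, x \in C2 -> - x \in C2) ->
  forall w w' c, w \in C1 -> w' \in C1 -> c \in C2 -> (2 %| S3 s w w' c)%N.
Proof.
move=> H C10 C1D C2D C2N.
have D4 : forall w c, w \in C1 -> c \in C2 -> (4 %| S2 s w c)%N.
  move=> w c wC cC.
  have e1 : Nw s (w + c) = Nw s w %[mod 8] := css_phase H C2D C2N wC cC.
  have e2 := css_phase H C2D C2N C10 cC.
  rewrite add0r Nw0 in e2.
  have e3 : (Nw s (w + c) + 2 * S2 s w c = Nw s w + Nw s c)%N := Nw_rel cF w c.
  lia.
move=> w w' c wC w'C cC.
have := D4 _ _ wC cC; have := D4 _ _ w'C cC.
have : (4 %| S2 s (w + w') c)%N := D4 _ _ (C1D _ _ wC w'C) cC.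
have : (S2 s (w + w') c + 2 * S3 s w w' c = S2 s w c + S2 s w' c)%N := S2_rel cF w w' c.
lia.
Qed.

Lemma coef_wpolyS (R : nzRingType) n (x : 'rV[R]_n) j :
  (wpoly x)`_j = \sum_(i < n) x ord0 i * (j == i)%:R.
Proof. by rewrite /wpoly coef_sum; apply: eq_bigr => i _; rewrite coefZ coefXn. Qed.

Lemma coef_wpoly (R : nzRingType) n (x : 'rV[R]_n) (i : 'I_n) : (wpoly x)`_i = x ord0 i.
Proof.
rewrite coef_wpolyS (bigD1 i) //= eqxx mulr1 big1 ?addr0 // => k /negbTE nk.
by rewrite eq_sym -val_eqE /= in nk; rewrite nk mulr0.
Qed.

Lemma coef_wpoly_ge (R : nzRingType) n (x : 'rV[R]_n) j : (n <= j)%N -> (wpoly x)`_j = 0.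
Proof.
move=> nj; rewrite coef_wpolyS big1 // => i _.
have : (i < j)%N by apply: leq_trans (ltn_ord i) nj.
by rewrite ltn_neqAle eq_sym => /andP [/negbTE -> _]; rewrite mulr0.
Qed.

Lemma wpolyD (R : nzRingType) n (x y : 'rV[R]_n) : wpoly (x + y) = wpoly x + wpoly y.
Proof. by rewrite /wpoly -big_split; apply: eq_bigr => i _; rewrite mxE scalerDl. Qed.

Lemma wpolyN (R : nzRingType) n (x : 'rV[R]_n) : wpoly (- x) = - wpoly x.
Proof. by rewrite /wpoly -sumrN; apply: eq_bigr => i _; rewrite mxE scaleNr. Qed.

Lemma wpoly0 (R : nzRingType) n : wpoly (0 : 'rV[R]_n) = 0.
Proof. by rewrite /wpoly big1 // => i _; rewrite mxE scale0r. Qed.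

Lemma cc0 (R : finFieldType) n (g : {poly R}) : 0 \in cyclic_code n g.
Proof. by rewrite inE wpoly0 dvdp0. Qed.

Lemma ccD (R : finFieldType) n (g : {poly R}) x y :
  x \in cyclic_code n g -> y \in cyclic_code n g -> x + y \in cyclic_code n g.
Proof. by rewrite !inE wpolyD; apply: dvdp_add. Qed.

Lemma ccN (R : finFieldType) n (g : {poly R}) x :
  x \in cyclic_code n g -> - x \in cyclic_code n g.
Proof. by rewrite !inE wpolyN dvdpNr. Qed.

Lemma wpoly_row (R : nzRingType) n (p : {poly R}) :
  (size p <= n)%N -> wpoly (\row_(i < n) p`_i) = p.
Proof.
move=> sp; apply/polyP => j.
case: (ltnP j n) => jn.
  by rewrite (coef_wpoly _ (Ordinal jn)) mxE.
by rewrite coef_wpoly_ge // nth_default // (leq_trans sp).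
Qed.

Definition Tr (L : nzRingType) n (p q r : {poly L}) : L :=
  \sum_(t < n) p`_t * q`_t * r`_t.

Lemma Tr_lin (L : comNzRingType) n m (c : 'I_m -> L) (P : 'I_m -> {poly L}) q r :
  Tr n (\sum_(k < m) c k *: P k) q r = \sum_(k < m) c k * Tr n (P k) q r.
Proof.
rewrite /Tr; under eq_bigr do rewrite coef_sum !mulr_suml.
rewrite exchange_big; apply: eq_bigr => k _; rewrite mulr_sumr.
by apply: eq_bigr => t _; rewrite coefZ !mulrA.
Qed.

Lemma Tr_sym12 (L : comNzRingType) n (p q r : {poly L}) : Tr n p q r = Tr n q p r.
Proof. by apply: eq_bigr => t _; rewrite (mulrC p`_t). Qed.

Lemma Tr_sym13 (L : comNzRingType) n (p q r : {poly L}) : Tr n p q r = Tr n r q p.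
Proof. by apply: eq_bigr => t _; rewrite mulrC (mulrC p`_t) mulrA. Qed.

Lemma expand (L : fieldType) (e : {rmorphism 'F_2 -> L}) n (h : {poly 'F_2}) (P : {poly L}) :
  h != 0 -> map_poly e h %| P -> (size P <= n)%N ->
  exists m (c : 'I_m -> L) (W : 'I_m -> 'rV['F_2]_n),
    P = \sum_(k < m) c k *: map_poly e (wpoly (W k)) /\ forall k, W k \in cyclic_code n h.
Proof.
move=> h0 dP sP.
set H := map_poly e h.
have H0 : H != 0 by rewrite map_poly_eq0.
set u := P %/ H.
have Pu : P = u * H by rewrite divpK.
exists (size u), (fun k => u`_k), (fun k => \row_(i < n) (h * 'X^k)`_i).
have sk : forall k : 'I_(size u), (size (h * 'X^k)%R <= n)%N.
  move=> k; rewrite size_mulXn //.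
  have u0 : u != 0 by apply/eqP => u0; have := ltn_ord k; rewrite {2}u0 size_poly0.
  move: sP; rewrite Pu size_mul // size_map_poly.
  have := ltn_ord k; set a := size u; set b := size h; set kk := nat_of_ord k; lia.
split.
  rewrite {1}Pu -{1}(coefK u) poly_def big_distrl /=.
  apply: eq_bigr => k _; rewrite wpoly_row // rmorphM /= map_polyXn -scalerAl.
  by rewrite [_ * H]mulrC.
by move=> k; rewrite inE wpoly_row //; apply: dvdp_mulIl.
Qed.

Definition Pz (L : nzRingType) n (z : L) : {poly L} :=
  \sum_(i < n) 'X^(n.-1 - i) * (z ^+ i)%:P.

Lemma PzE (L : comNzRingType) n (z : L) : z ^+ n = 1 -> 'X^n - 1 = ('X - z%:P) * Pz n z.
Proof.
move=> zn; rewrite /Pz.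
have -> : \sum_(i < n) 'X^(n.-1 - i) * (z ^+ i)%:P = \sum_(i < n) 'X^(n.-1 - i) * (z%:P) ^+ i.
  by apply: eq_bigr => i _; rewrite rmorphXn.
by rewrite -subrXX -rmorphXn zn.
Qed.

Lemma coef_Pz (L : nzRingType) n (z : L) t : (t < n)%N -> (Pz n z)`_t = z ^+ (n.-1 - t).
Proof.
move=> tn; rewrite /Pz coef_sum.
under eq_bigr do rewrite coefMC coefXn.
have tn' : (n.-1 - t < n)%N by lia.
rewrite (bigD1 (Ordinal tn')) //= big1.
  by rewrite addr0 (_ : n.-1 - (n.-1 - t) = t)%N ?eqxx ?mul1r //; lia.
move=> i /negbTE ni; case: eqP => E; last by rewrite mul0r.
rewrite -val_eqE /= in ni; move/eqP: ni; have := ltn_ord i; lia.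
Qed.

Lemma size_Pz (L : idomainType) n (z : L) : (0 < n)%N -> z ^+ n = 1 -> size (Pz n z) = n.
Proof.
move=> n0 zn; have := size_Xn_sub_1 L n0; rewrite (PzE zn).
have [->|P0] := eqVneq (Pz n z) 0; first by rewrite mulr0 size_poly0.
by rewrite size_mul ?polyXsubC_eq0 // size_XsubC /=; case.
Qed.

Lemma Tr_Pz (L : comNzRingType) n (a b c : L) : a * b * c = 1 ->
  Tr n (Pz n a) (Pz n b) (Pz n c) = n%:R.
Proof.
move=> abc; rewrite /Tr.
under eq_bigr => t _ do rewrite !coef_Pz // -!exprMn abc expr1n.
by rewrite sumr_const card_ord.
Qed.

Lemma dvd_Pz (L : fieldType) (e : {rmorphism 'F_2 -> L}) n (h : {poly 'F_2}) (z : L) :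
  h %| 'X^n - 1 -> z ^+ n = 1 -> (map_poly e h).[z] != 0 -> map_poly e h %| Pz n z.
Proof.
move=> hd zn hz.
have hX : map_poly e ('X^n - 1) = 'X^n - 1 by rewrite rmorphB /= map_polyXn rmorph1.
rewrite -(dvdp_map e) hX (PzE zn) mulrC Gauss_dvdpl // in hd.
by rewrite coprimep_XsubC.
Qed.

Lemma Tr_zero (L : fieldType) (e : {rmorphism 'F_2 -> L}) n (h1 h2 : {poly 'F_2})
  (P1 P2 P3 : {poly L}) :
  h1 != 0 -> h2 != 0 ->
  map_poly e h1 %| P1 -> map_poly e h1 %| P2 -> map_poly e h2 %| P3 ->
  (size P1 <= n)%N -> (size P2 <= n)%N -> (size P3 <= n)%N ->
  (forall W1 W2 W3, W1 \in cyclic_code n h1 -> W2 \in cyclic_code n h1 ->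
     W3 \in cyclic_code n h2 ->
     Tr n (map_poly e (wpoly W3)) (map_poly e (wpoly W1)) (map_poly e (wpoly W2)) = 0) ->
  Tr n P1 P2 P3 = 0.
Proof.
move=> h10 h20 d1 d2 d3 s1 s2 s3 base.
have [m1 [c1 [W1 [-> HW1]]]] := expand h10 d1 s1.
rewrite Tr_lin big1 // => k1 _; rewrite Tr_sym12.
have [m2 [c2 [W2 [-> HW2]]]] := expand h10 d2 s2.
rewrite Tr_lin big1 ?mulr0 // => k2 _; rewrite Tr_sym13.
have [m3 [c3 [W3 [-> HW3]]]] := expand h20 d3 s3.
rewrite Tr_lin big1 ?mulr0 // => k3 _.
by rewrite base ?mulr0.
Qed.

Lemma base (F : finFieldType) s (L : fieldType) (e : {rmorphism 'F_2 -> L}) n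
  (C1 C2 : {set 'rV[F]_n}) (h1 h2 : {poly 'F_2}) :
  cyclic_code n h1 = trace_code s C1 -> cyclic_code n h2 = trace_code s C2 ->
  (forall w w' c, w \in C1 -> w' \in C1 -> c \in C2 -> (2 %| S3 s w w' c)%N) ->
  2%:R = 0 :> L ->
  forall W1 W2 W3, W1 \in cyclic_code n h1 -> W2 \in cyclic_code n h1 ->
     W3 \in cyclic_code n h2 ->
     Tr n (map_poly e (wpoly W3)) (map_poly e (wpoly W1)) (map_poly e (wpoly W2)) = 0.
Proof.
move=> E1 E2 Hpar H2 W1 W2 W3; rewrite E1 E2.
move=> /imsetP [c1 c1C ->] /imsetP [c1' c1'C ->] /imsetP [c2 c2C ->].
have /dvdnP [k Hk] := Hpar _ _ _ c1C c1'C c2C.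
have -> : Tr n (map_poly e (wpoly (map_mx (tr2 s) c2))) (map_poly e (wpoly (map_mx (tr2 s) c1)))
            (map_poly e (wpoly (map_mx (tr2 s) c1'))) = (S3 s c1 c1' c2)%:R.
  rewrite /Tr /S3 natr_sum; apply: eq_bigr => t _.
  rewrite !coef_map /= !coef_wpoly !mxE /tr2 !rmorph_nat -!natrM.
  by congr (_%:R); rewrite [RHS]mulnC mulnA.
by rewrite Hk natrM H2 mulr0.
Qed.

Unset Implicit Arguments.

Theorem mainTheorem11
  (s : nat) (F : finFieldType) (n : nat)
  (L : fieldType) (iota : {rmorphism F -> L}) (beta : L)
  (g1 g2 : {poly F}) (h1 h2 : {poly 'F_2}) :
  (0 < s)%N -> #|F| = (2 ^ s)%N -> odd n ->
  n.-primitive_root beta ->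
  g1 %| 'X^n - 1 -> g2 %| 'X^n - 1 ->
  CSST_pair s (cyclic_code n g1) (cyclic_code n g2) ->
  h1 %| 'X^n - 1 -> h2 %| 'X^n - 1 ->
  cyclic_code n h1 = trace_code s (cyclic_code n g1) ->
  cyclic_code n h2 = trace_code s (cyclic_code n g2) ->
  let I1q := genset iota beta n g1 in
  let I2q := genset iota beta n g2 in
  let I12 := genset (fun b : 'F_2 => iota (f2F F b)) beta n h1 in
  let I22 := genset (fun b : 'F_2 => iota (f2F F b)) beta n h2 in
  I2q \subset I1q /\
  (forall i0 : 'I_n, nat_of_ord i0 = 0%N -> i0 \notin msum (msum I12 I12) I22).
Proof.
move=> s0 cF odd_n prim g1d g2d CS h1d h2d E1 E2 I1q I2q I12 I22.
have n0 : (0 < n)%N by case: n odd_n {prim g1d g2d CS h1d h2d E1 E2 I1q I2q I12 I22}.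
have Xn0 : forall (R : fieldType), ('X^n - 1 : {poly R}) != 0.
  by move=> R; rewrite -size_poly_eq0 size_Xn_sub_1.
have nz : forall (R : fieldType) (g : {poly R}), g %| 'X^n - 1 -> g != 0.
  by move=> R g gd; apply/eqP => g0; move: gd; rewrite g0 dvd0p (negbTE (Xn0 R)).
split.
  have [sub _] := CS.
  have g1g2 : g1 %| g2.
    case: (leqP (size g2) n) => sg.
      have : \row_(i < n) g2`_i \in cyclic_code n g2 by rewrite inE wpoly_row.
      by move/(subsetP sub); rewrite inE wpoly_row.
    have sg2 : (size g2 <= n.+1)%N.
      by rewrite -(size_Xn_sub_1 F n0); apply: dvdp_leq => //; apply: Xn0.
    have : size g2 == size ('X^n - 1 : {poly F}) by rewrite size_Xn_sub_1 // eqn_leq sg2.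
    by rewrite (dvdp_size_eqp g2d) => /(eqp_dvdr g1) ->.
  apply/subsetP => i; rewrite !inE.
  have /dvdpP [k ->] := g1g2.
  by rewrite rmorphM hornerM mulf_eq0 negb_or => /andP [_ ->].
move=> i0 i00.
have H2F := char2F cF.
have H2L : 2%:R = 0 :> L by rewrite -(rmorph_nat iota) H2F rmorph0.
pose e : {rmorphism 'F_2 -> L} := iota \o e2 H2F.
have emb : forall h, map_poly (fun b : 'F_2 => iota (f2F F b)) h = map_poly e h.
  by move=> h; apply: eq_map_poly.
have Hpar := parity cF CS (cc0 _ _) (@ccD _ _ _) (@ccD _ _ _) (@ccN _ _ _).
have Hbase := base e E1 E2 Hpar H2L.
apply/negP; rewrite inE => /existsP [a /andP [aA /existsP [k /andP [kK /eqP ak]]]].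
move: aA; rewrite inE => /existsP [i /andP [iI /existsP [j /andP [jI /eqP ij]]]].
move: iI jI kK; rewrite /I12 /I22 /genset !inE !emb => iI jI kK.
have zn : forall m : nat, (beta ^+ m) ^+ n = 1.
  by move=> m; rewrite exprAC (prim_expr_order prim) expr1n.
have prod1 : beta ^+ i * beta ^+ j * beta ^+ k = 1.
  rewrite -!exprD -(prim_expr_mod prim) -modnDml ij ak i00.
  by rewrite expr0.
have := Tr_Pz n prod1.
rewrite (Tr_zero (nz _ _ h1d) (nz _ _ h2d) (dvd_Pz h1d (zn _) iI) (dvd_Pz h1d (zn _) jI)
    (dvd_Pz h2d (zn _) kK)) ?size_Pz // => /eqP.
rewrite eq_sym -(odd_double_half n) odd_n natrD -muln2 natrM H2L mulr0 addr0.
by rewrite oner_eq0.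
Qed.
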